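(* Let $F(x,y)=ax^4+bx^3y+cx^2y^2+dxy^3+ey^4$ be an integral binary quartic form with $a\neq0$ and $b\neq 0$. Let $p>3$ be a prime with $\nu_p(b)>0$. Then $R(F)$ is dense in $\mathbb{Q}_p$ if one of the following holds: (1) $p\equiv 1\pmod 3$, $a^2c^2+12a^3e\equiv 0\pmod p$, and $8a^3c^3+27a^4d^2$ is a cubic non-residue modulo $p$; (2) $a^2c^2+12a^3e\not\equiv 0\pmod p$ and $s_{p+1}\equiv a^2c^2-4a^3e\pmod p$, where the sequence $(s_n)$ is defined by $s_0=3$, $s_1=-2ac$, $s_2=2a^2c^2+8a^3e$, and $s_{n+3}=-2acs_{n+2}+(4a^3e-a^2c^2)s_{n+1}+a^4d^2s_n$ for $n\geq 0$.
   Context: $\nu_p$ is the $p$-adic valuation. $R(F)=\{F(x_1,y_1)/F(x_2,y_2) : x_i,y_i\in\mathbb{Z},\ F(x_2,y_2)\neq 0\}$, and density is in the $p$-adic topology. *)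

(* Defs.v *)
From mathcomp Require Import all_boot all_order all_algebra.
Set Implicit Arguments. Unset Strict Implicit. Unset Printing Implicit Defensive.
Import Order.TTheory GRing.Theory Num.Theory.
Local Open Scope ring_scope.

Definition quartic (a b c d e x y : int) : int :=
  a * x ^+ 4 + b * x ^+ 3 * y + c * x ^+ 2 * y ^+ 2 + d * x * y ^+ 3 + e * y ^+ 4.

Definition RF (a b c d e : int) (r : rat) : Prop :=
  exists x1 y1 x2 y2 : int,
    quartic a b c d e x2 y2 != 0 /\
    r = (quartic a b c d e x1 y1)%:~R / (quartic a b c d e x2 y2)%:~R.

(* p-adic valuation of a nonzero rational (numq/denq is the reduced form);
   the value at 0 is irrelevant (nu_p(0) = +oo is handled separately). *)
Definition nu_p (p : nat) (q : rat) : int :=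
  (logn p `|numq q|%N)%:Z - (logn p `|denq q|%N)%:Z.

(* S ⊆ Q is dense in Q_p (p-adic topology).  Since Q is dense in Q_p, this
   is equivalent to: every rational q is a p-adic limit of elements of S,
   i.e. for every q and every k there is r in S with |r - q|_p <= p^-k. *)
Definition dense_in_Qp (p : nat) (S : rat -> Prop) : Prop :=
  forall (q : rat) (k : int), exists r : rat, S r /\ (r = q \/ k <= nu_p p (r - q)).

Fixpoint s_triple (a c d e : int) (n : nat) : int * int * int :=
  match n with
  | 0%N => (3, - (2 * a * c), 2 * a ^+ 2 * c ^+ 2 + 8 * a ^+ 3 * e)
  | n'.+1 =>
      let: (x, y, z) := s_triple a c d e n' in
      (y, z, - (2 * a * c) * z + (4 * a ^+ 3 * e - a ^+ 2 * c ^+ 2) * y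
               + a ^+ 4 * d ^+ 2 * x)
  end.

Definition s_seq (a c d e : int) (n : nat) : int := (s_triple a c d e n).1.1.

Definition cubic_residue (p : nat) (t : int) : Prop :=
  exists u : int, (p%:Z %| u ^+ 3 - t)%Z.

(* Main.v *)
Require Import Defs.
From mathcomp Require Import all_boot all_order all_algebra all_field.
From mathcomp Require Import ring zify.
Import Order.TTheory GRing.Theory Num.Theory.
Set Implicit Arguments. Unset Strict Implicit. Unset Printing Implicit Defensive.
Local Open Scope ring_scope.

Definition pc (i j : nat) : nat :=
  if i == 0%N then j.-1 else if j == 0%N then i.-1 else (5 - i - j)%N.
Definition tauL (Is : seq nat) : seq nat :=
  [seq pc (nth 0%N Is 0) (nth 0%N Is k.+1) | k <- iota 0 3].
Definition six : seq (seq nat) :=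
  [:: [:: 0;1;2]; [:: 0;2;1]; [:: 2;1;0]; [:: 1;0;2]; [:: 1;2;0]; [:: 2;0;1]]%N.
Definition cyc3 : seq (seq nat) := [:: [:: 1;2;0]; [:: 2;0;1]]%N.

Lemma comb_check :
  all (fun Is => (tauL Is \in six) &&
     ((tauL Is \in cyc3) ==> has (fun i => nth 0%N Is i == i) (iota 0 4)))
    (permutations (iota 0 4)).
Proof. by vm_compute. Qed.

Section Alg.
Variable L : fieldType.
Variable phi : {rmorphism L -> L}.
Variables a0 a1 a2 : L.
Definition al (i : nat) : L := nth 0 [:: a0; a1; a2; -(a0+a1+a2)] i.
Definition th (k : nat) : L := (al 0 + al k.+1) ^+ 2.
Definition Pv := al 0 * al 1 + al 0 * al 2 + al 0 * al 3 + al 1 * al 2 + al 1 * al 3 + al 2 * al 3.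
Definition Qv := -(al 0 * al 1 * al 2 + al 0 * al 1 * al 3 + al 0 * al 2 * al 3 + al 1 * al 2 * al 3).
Definition Rv := al 0 * al 1 * al 2 * al 3.
Definition e1t := th 0 + th 1 + th 2.
Definition e2t := th 0 * th 1 + th 0 * th 2 + th 1 * th 2.
Definition hdv (x : L) := 4 * x ^+ 3 + 2 * Pv * x + Qv.
Definition hv (x : L) := x ^+ 4 + Pv * x ^+ 2 + Qv * x + Rv.

Lemma Tpc i j : (i < 4)%N -> (j < 4)%N -> i != j -> (al i + al j) ^+ 2 = th (pc i j).
Proof.
case: i => [|[|[|[|i]]]] //; case: j => [|[|[|[|j]]]] // _ _ _;
  rewrite /th /al /pc /=; ring.
Qed.

Lemma hv_root i : (i < 4)%N -> hv (al i) = 0.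
Proof. case: i => [|[|[|[|i]]]] // _; rewrite /hv /Pv /Qv /Rv /al /=; ring. Qed.

Ltac tsign h V H0 :=
  first [ transitivity (h * V); [rewrite /hdv /th /Pv /Qv /al /=; ring | by rewrite H0 mul0r]
        | transitivity (- (h * V)); [rewrite /hdv /th /Pv /Qv /al /=; ring | by rewrite H0 mul0r oppr0] ].

Lemma hd_dist i : (i < 4)%N -> th 0 != th 1 -> th 0 != th 2 -> th 1 != th 2 -> hdv (al i) != 0.
Proof.
move=> Hi h01 h02 h12.
have D : (th 0 - th 1) * (th 0 - th 2) * (th 1 - th 2) != 0.
  by rewrite !mulf_neq0 // subr_eq0.
apply: contraNneq D => H0.
apply/eqP; case: i Hi H0 => [|[|[|[|i]]]] // _ H0.
- by tsign (hdv (al 0)) ((al 1 - al 2) * (al 1 - al 3) * (al 2 - al 3)) H0.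
- by tsign (hdv (al 1)) ((al 0 - al 2) * (al 0 - al 3) * (al 2 - al 3)) H0.
- by tsign (hdv (al 2)) ((al 0 - al 1) * (al 0 - al 3) * (al 1 - al 3)) H0.
- by tsign (hdv (al 3)) ((al 0 - al 1) * (al 0 - al 2) * (al 1 - al 2)) H0.
Qed.


Definition HCg (x y z : L) :=
  (phi x != x /\ phi y != y /\ phi z != z) \/
  (x * phi x + y * phi y + z * phi z = x * y + x * z + y * z /\
   (x + y + z) ^+ 2 - 3 * (x * y + x * z + y * z) != 0).

Lemma HCg_12 x y z : HCg x y z -> HCg y x z.
Proof.
case=> [[? [? ?]]|[H1 H2]]; [by left | right]; split.
  by transitivity (x * phi x + y * phi y + z * phi z); [ring | rewrite H1; ring].
by move: H2; congr (_ != _); ring.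
Qed.

Lemma HCg_23 x y z : HCg x y z -> HCg x z y.
Proof.
case=> [[? [? ?]]|[H1 H2]]; [by left | right]; split.
  by transitivity (x * phi x + y * phi y + z * phi z); [ring | rewrite H1; ring].
by move: H2; congr (_ != _); ring.
Qed.

Lemma alleq_contra (x y z : L) : x = y -> y = z -> (x + y + z) ^+ 2 - 3 * (x * y + x * z + y * z) = 0.
Proof. by move=> -> ->; ring. Qed.

Lemma L_id x y z : phi x = x -> phi y = y -> phi z = z -> HCg x y z -> False.
Proof.
move=> fx fy fz [[/eqP ? _]//|[H1 /eqP H2]]; apply: H2.
rewrite fx fy fz in H1.
transitivity (x * x + y * y + z * z - (x * y + x * z + y * z)); first ring.
by rewrite H1 subrr.
Qed.

Lemma L_tr x y z : phi x = x -> phi y = z -> phi z = y -> HCg x y z -> False.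
Proof.
move=> fx fy fz [[/eqP ? _]//|[H1 /eqP H2]]; apply: H2.
rewrite fx fy fz in H1.
have : (x - y) * (x - z) = 0.
  transitivity (x * x + y * z + z * y - (x * y + x * z + y * z)); first ring.
  by rewrite H1 subrr.
case/eqP; rewrite mulf_eq0 !subr_eq0 => /orP[/eqP E|/eqP E].
  have E2 : y = z by rewrite -fy -E fx.
  exact: alleq_contra.
have E2 : y = z by rewrite -fz -E fx.
by apply: alleq_contra; [rewrite E E2 | exact: E2].
Qed.

Lemma L_cyc x y z : phi x = y -> phi y = z -> phi z = x -> HCg x y z ->
  [/\ x != y, y != z & x != z].
Proof.
move=> fx fy fz HC.
have allc : x = y -> y = z -> False.
  move=> E1 E2; case: HC => [[/eqP A _]|[_ /eqP B]]; first by apply: A; rewrite fx.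
  by apply: B; apply: alleq_contra.
split; apply/eqP => E.
- by apply (allc E); rewrite -fy -E fx.
- have xy : x = y by rewrite -fz -E fy E.
  exact: allc xy E.
- by apply: allc; rewrite -fx E fz E.
Qed.

Lemma cubic_id (x : L) : 27 * ((x - th 0) * (x - th 1) * (x - th 2)) =
  (3 * x + 2 * Pv) ^+ 3 - (8 * Pv ^+ 3 + 27 * Qv ^+ 2) - 9 * (Pv ^+ 2 + 12 * Rv) * x.
Proof. rewrite /th /Pv /Qv /Rv /al /=; ring. Qed.

Lemma ps1 : th 0 + th 1 + th 2 = - (2 * Pv).
Proof. rewrite /th /Pv /al /=; ring. Qed.

Lemma ps2 : th 0 ^+ 2 + th 1 ^+ 2 + th 2 ^+ 2 = 2 * Pv ^+ 2 + 8 * Rv.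
Proof. rewrite /th /Pv /Rv /al /=; ring. Qed.

Lemma e2_id : th 0 * th 1 + th 0 * th 2 + th 1 * th 2 = Pv ^+ 2 - 4 * Rv.
Proof. rewrite /th /Pv /Rv /al /=; ring. Qed.

Lemma K_id : (th 0 + th 1 + th 2) ^+ 2 - 3 * (th 0 * th 1 + th 0 * th 2 + th 1 * th 2)
  = Pv ^+ 2 + 12 * Rv.
Proof. rewrite /th /Pv /Rv /al /=; ring. Qed.

Lemma ps_rec n : th 0 ^+ n.+3 + th 1 ^+ n.+3 + th 2 ^+ n.+3 =
  - (2 * Pv) * (th 0 ^+ n.+2 + th 1 ^+ n.+2 + th 2 ^+ n.+2)
  + (4 * Rv - Pv ^+ 2) * (th 0 ^+ n.+1 + th 1 ^+ n.+1 + th 2 ^+ n.+1)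
  + Qv ^+ 2 * (th 0 ^+ n + th 1 ^+ n + th 2 ^+ n).
Proof.
rewrite !exprS.
move: (th 0 ^+ n) (th 1 ^+ n) (th 2 ^+ n) => t0 t1 t2.
rewrite /th /Pv /Qv /Rv /al /=; ring.
Qed.

Lemma alg_main (Is : seq nat) : perm_eq Is (iota 0 4) ->
  (forall i, (i < 4)%N -> phi (al i) = al (nth 0%N Is i)) ->
  HCg (th 0) (th 1) (th 2) ->
  exists i, [/\ (i < 4)%N, phi (al i) = al i & hdv (al i) != 0].
Proof.
move=> HIs Hal HC.
have uIs : uniq Is by rewrite (perm_uniq HIs) iota_uniq.
have sIs : size Is = 4%N by rewrite (perm_size HIs) size_iota.
have mIs i : (i < 4)%N -> (nth 0%N Is i < 4)%N.
  move=> Hi; have : nth 0%N Is i \in Is by rewrite mem_nth // sIs.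
  by rewrite (perm_mem HIs) mem_iota.
have Hth k : (k < 3)%N -> phi (th k) = th (nth 0%N (tauL Is) k).
  move=> Hk; rewrite [th k]/th rmorphXn rmorphD /= !Hal //.
  rewrite Tpc ?mIs //; try lia.
  2: by rewrite nth_uniq ?sIs //; lia.
  by rewrite /tauL (nth_map 0%N) ?size_iota // nth_iota.
have := allP comb_check Is; rewrite mem_permutations HIs => /(_ isT) /andP [Hsix Hcyc].
have f0 := Hth 0%N isT; have f1 := Hth 1%N isT; have f2 := Hth 2%N isT.
have fin : (tauL Is \in cyc3) -> th 0 != th 1 -> th 0 != th 2 -> th 1 != th 2 ->
    exists i, [/\ (i < 4)%N, phi (al i) = al i & hdv (al i) != 0].
  move=> Hc d01 d02 d12; move: Hcyc; rewrite Hc implyTb => /seq.hasP [i].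
  rewrite mem_iota /= => Hi /eqP Ei; exists i; split => //.
    by rewrite Hal // Ei.
  exact: hd_dist.
move: Hsix f0 f1 f2 fin; rewrite !inE.
case/orP=> [/eqP -> /= f0 f1 f2 _|]; first by case: (L_id f0 f1 f2 HC).
case/orP=> [/eqP -> /= f0 f1 f2 _|]; first by case: (L_tr f0 f1 f2 HC).
case/orP=> [/eqP -> /= f0 f1 f2 _|]; first by case: (L_tr f1 f0 f2 (HCg_12 HC)).
case/orP=> [/eqP -> /= f0 f1 f2 _|]; first by case: (L_tr f2 f0 f1 (HCg_12 (HCg_23 HC))).
case/orP=> [/eqP -> /= f0 f1 f2 fin|/eqP -> /= f0 f1 f2 fin].
  by case: (L_cyc f0 f1 f2 HC) => d01 d12 d02; apply: fin.
case: (L_cyc f0 f2 f1 (HCg_23 HC)) => d02 d21 d01; apply: fin => //.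
by rewrite eq_sym.
Qed.
End Alg.

Lemma prod4 (L : comNzRingType) (b0 b1 b2 b3 : L) :
  \prod_(z <- [:: b0; b1; b2; b3]) ('X - z%:P) =
  'X^4 - (b0 + b1 + b2 + b3)%:P * 'X^3
  + (b0*b1 + b0*b2 + b0*b3 + b1*b2 + b1*b3 + b2*b3)%:P * 'X^2
  - (b0*b1*b2 + b0*b1*b3 + b0*b2*b3 + b1*b2*b3)%:P * 'X + (b0*b1*b2*b3)%:P.
Proof. rewrite !big_cons big_nil !(polyCD, polyCM); ring. Qed.

Definition hF (p : nat) (P Q R : 'F_p) : {poly 'F_p} := Poly [:: R; Q; P; 0; 1].
Lemma hF_seq p (P Q R : 'F_p) : hF P Q R = [:: R; Q; P; 0; 1] :> seq _.
Proof. by rewrite /hF (@PolyK _ 0) //= oner_eq0. Qed.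
Lemma hF_monic p (P Q R : 'F_p) : hF P Q R \is monic.
Proof. by rewrite monicE lead_coefE hF_seq. Qed.

Lemma map_cubic (F : fieldType) (L : lalgType F) (y P Q R : F) :
  ((3 * y + 2 * P) ^+ 3 - (8 * P ^+ 3 + 27 * Q ^+ 2) - 9 * (P ^+ 2 + 12 * R) * y)%:A
  = (3 * y%:A + 2 * P%:A) ^+ 3 - (8 * P%:A ^+ 3 + 27 * Q%:A ^+ 2)
    - 9 * (P%:A ^+ 2 + 12 * R%:A) * y%:A :> L.
Proof. by rewrite -!in_algE !(rmorphB, rmorphD, rmorphM, rmorphXn, rmorph_nat, rmorph1). Qed.

Lemma field_root (p : nat) (pr : prime p) (p3 : (3 < p)%N) (P Q R : 'F_p)
  (S : nat -> 'F_p) :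
  S 0%N = 3 -> S 1%N = - (2 * P) -> S 2%N = 2 * P ^+ 2 + 8 * R ->
  (forall n, S n.+3 = - (2 * P) * S n.+2 + (4 * R - P ^+ 2) * S n.+1 + Q ^+ 2 * S n) ->
  ((P ^+ 2 + 12 * R = 0 /\ forall u : 'F_p, u ^+ 3 != 8 * P ^+ 3 + 27 * Q ^+ 2) \/
   (P ^+ 2 + 12 * R != 0 /\ S p.+1 = P ^+ 2 - 4 * R)) ->
  exists y : 'F_p, y ^+ 4 + P * y ^+ 2 + Q * y + R = 0 /\ 4 * y ^+ 3 + 2 * P * y + Q != 0.
Proof.
move=> S0 S1 S2 Srec Hcond.
have hnz : hF P Q R != 0 by rewrite monic_neq0 // hF_monic.
have [L [rs Hrs _]] := FinSplittingFieldFor hnz.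
rewrite eqp_monic ?map_monic ?hF_monic ?monic_prod_XsubC // in Hrs.
move/eqP: Hrs => Hrs.
have : size rs = 4%N.
  have := congr1 (fun q : {poly L} => size q) Hrs.
  by rewrite size_prod_XsubC size_map_poly hF_seq; case.
case: rs Hrs => [|b0 [|b1 [|b2 [|b3 [|]]]]] Hrs // _.
have cf k := congr1 (fun q : {poly L} => q`_k) Hrs.
have c3 := cf 3%N; have c2 := cf 2%N; have c1 := cf 1%N; have c0 := cf 0%N.
rewrite prod4 /= !coef_map /= hF_seq /= !(coefD, coefN, coefCM, coefXn, coefC, coefX) /= in c3 c2 c1 c0.
rewrite scale0r in c3.
rewrite !mulr0 !mulr1 !addr0 sub0r in c3.
have E3 : b0 + b1 + b2 + b3 = 0.
  by move: c3; rewrite subr0 => c3; apply/eqP; rewrite -oppr_eq0 -c3.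
have hb3 : b3 = - (b0 + b1 + b2).
  by rewrite -[b3]subr0 -E3; ring.
subst b3.
have hP : Pv b0 b1 b2 = P%:A by rewrite c2 /Pv /al /=; ring.
have hQ : Qv b0 b1 b2 = Q%:A by rewrite c1 /Qv /al /=; ring.
have hR : Rv b0 b1 b2 = R%:A by rewrite c0 /Rv /al /=; ring.
clear c0 c1 c2 c3 cf E3.
have pcL : p \in [pchar L] by rewrite pchar_lalg pchar_Fp.
pose phi := pFrobenius_aut pcL.
have phiE x : phi x = x ^+ p := pFrobenius_autE pcL x.
have phiF (y : 'F_p) : phi (y%:A) = y%:A.
  by rewrite phiE -in_algE -rmorphXn /= -{2}(expf_card y) card_Fp.
have fixF x : phi x = x -> exists y : 'F_p, x = y%:A.
  move=> H; have : x \in (1%AS : {subfield L}).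
    by rewrite Fermat's_little_theorem /= dimv1 expn1 card_Fp // -phiE H.
  by case/vlineP => y ->; exists y.
have Hperm : perm_eq (map phi [:: b0; b1; b2; -(b0+b1+b2)]) [:: b0; b1; b2; -(b0+b1+b2)].
  apply: prod_XsubC_eq; rewrite prod_map_poly -Hrs -map_poly_comp.
  by apply: eq_map_poly => y /=; idtac.
case/(perm_iotaP 0): Hperm => Is HIs Es.
have sIs : size Is = 4%N by rewrite (perm_size HIs).
have Hal i : (i < 4)%N -> phi (al b0 b1 b2 i) = al b0 b1 b2 (nth 0%N Is i).
  move=> Hi; have E := congr1 (fun s => nth 0 s i) Es; cbv beta in E.
  by rewrite (nth_map 0) // (nth_map 0%N) ?sIs // in E.
have psum n : [/\ (S n)%:A = th b0 b1 b2 0 ^+ n + th b0 b1 b2 1 ^+ n + th b0 b1 b2 2 ^+ n,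
   (S n.+1)%:A = th b0 b1 b2 0 ^+ n.+1 + th b0 b1 b2 1 ^+ n.+1 + th b0 b1 b2 2 ^+ n.+1
 & (S n.+2)%:A = th b0 b1 b2 0 ^+ n.+2 + th b0 b1 b2 1 ^+ n.+2 + th b0 b1 b2 2 ^+ n.+2].
  elim: n => [|n [IH0 IH1 IH2]].
    split.
    - by rewrite S0 !expr0 -in_algE rmorph_nat; ring.
    - by rewrite S1 !expr1 ps1 hP -!in_algE !(rmorphN, rmorphM, rmorph_nat).
    - by rewrite S2 ps2 hP hR -!in_algE !(rmorphD, rmorphM, rmorphXn, rmorph_nat).
  split => //.
  rewrite ps_rec hP hQ hR -IH0 -IH1 -IH2 Srec -!in_algE.
  rewrite !(rmorphD, rmorphM, rmorphN, rmorphB, rmorphXn, rmorph_nat, rmorph1); ring.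
have HC : HCg phi (th b0 b1 b2 0) (th b0 b1 b2 1) (th b0 b1 b2 2).
  case: Hcond => [[HK Hcube]|[HK HS]].
    have nfix k : (k < 3)%N -> phi (th b0 b1 b2 k) != th b0 b1 b2 k.
      move=> Hk; apply/eqP => /fixF [y Ey].
      have r0 : (th b0 b1 b2 k - th b0 b1 b2 0) * (th b0 b1 b2 k - th b0 b1 b2 1)
                * (th b0 b1 b2 k - th b0 b1 b2 2) = 0.
        by case: k Hk {Ey} => [|[|[|k]]] // _; apply/eqP; rewrite !mulf_eq0 subrr eqxx ?orbT.
      have := cubic_id b0 b1 b2 (th b0 b1 b2 k); rewrite r0 mulr0 hP hQ hR Ey => E0.
      have E : ((3 * y + 2 * P) ^+ 3 - (8 * P ^+ 3 + 27 * Q ^+ 2) - 9 * (P ^+ 2 + 12 * R) * y)%:A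
        = (3 * y%:A + 2 * P%:A) ^+ 3 - (8 * P%:A ^+ 3 + 27 * Q%:A ^+ 2)
          - 9 * (P%:A ^+ 2 + 12 * R%:A) * y%:A :> L.
        exact: map_cubic.
      rewrite -E0 -in_algE in E; move/eqP: E; rewrite fmorph_eq0 HK mulr0 mul0r subr0 subr_eq0.
      by apply/negP; apply: Hcube.
    by left; split; [|split]; apply: nfix.
  right; split.
    have [_ E _] := psum p; rewrite HS in E.
    rewrite /= !pFrobenius_autE -!exprS -E e2_id hP hR.
    by rewrite -!in_algE !(rmorphB, rmorphD, rmorphM, rmorphXn, rmorph_nat, rmorph1).
  rewrite K_id hP hR.
  have E : (P ^+ 2 + 12 * R)%:A = P%:A ^+ 2 + 12 * R%:A :> L.
    by rewrite -!in_algE !(rmorphB, rmorphD, rmorphM, rmorphXn, rmorph_nat, rmorph1).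
  by rewrite -E -in_algE fmorph_eq0.
have [i [Hi fixi hdi]] := alg_main HIs Hal HC.
have [y Ey] := fixF _ fixi.
exists y; split.
  have := hv_root b0 b1 b2 Hi; rewrite /hv hP hQ hR Ey => E0.
  have E : (y ^+ 4 + P * y ^+ 2 + Q * y + R)%:A
     = (y%:A) ^+ 4 + P%:A * (y%:A) ^+ 2 + Q%:A * y%:A + R%:A :> L.
    by rewrite -!in_algE !(rmorphB, rmorphD, rmorphM, rmorphXn, rmorph_nat, rmorph1).
  by rewrite E0 -in_algE in E; move/eqP: E; rewrite fmorph_eq0 => /eqP.
move: hdi; rewrite /hdv hP hQ Ey.
have E : (4 * y ^+ 3 + 2 * P * y + Q)%:A
   = 4 * (y%:A) ^+ 3 + 2 * P%:A * y%:A + Q%:A :> L.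
  by rewrite -!in_algE !(rmorphB, rmorphD, rmorphM, rmorphXn, rmorph_nat, rmorph1).
by rewrite -E -in_algE fmorph_eq0.
Qed.

Definition gq (a b c d e x : int) : int := a * x ^+ 4 + b * x ^+ 3 + c * x ^+ 2 + d * x + e.
Definition gd (a b c d x : int) : int := 4 * a * x ^+ 3 + 3 * b * x ^+ 2 + 2 * c * x + d.

Lemma gq_taylor a b c d e x t : gq a b c d e (x + t) =
  gq a b c d e x + gd a b c d x * t +
  t ^+ 2 * (6 * a * x ^+ 2 + 3 * b * x + c + (4 * a * x + b) * t + a * t ^+ 2).
Proof. rewrite /gq /gd; ring. Qed.

Lemma gd_taylor a b c d x t : gd a b c d (x + t) =
  gd a b c d x + t * (12 * a * x ^+ 2 + 6 * b * x + 2 * c + (12 * a * x + 3 * b) * t + 4 * a * t ^+ 2).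
Proof. rewrite /gd; ring. Qed.

Lemma hensel (a b c d e : int) (p : nat) (r : int) : prime p ->
  (p%:Z %| gq a b c d e r)%Z -> ~~ (p%:Z %| gd a b c d r)%Z ->
  forall N, exists x, (p%:Z ^+ N.+1 %| gq a b c d e x)%Z /\ ~~ (p%:Z %| gd a b c d x)%Z.
Proof.
move=> pr Hr Hd; elim=> [|N [x [Hx Hdx]]]; first by exists r; rewrite expr1.
have [m Em] := dvdzP Hx.
have cop : coprimez (gd a b c d x) p%:Z.
  by rewrite coprimezE coprime_sym prime_coprime //; move: Hdx; rewrite dvdzE.
have [[u v] /= Bez] := coprimezP _ _ cop.
pose t := - (m * u) * p%:Z ^+ N.+1.
exists (x + t); split.
  apply/dvdzP; exists (m * v + m ^+ 2 * u ^+ 2 * p%:Z ^+ N *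
    (6 * a * x ^+ 2 + 3 * b * x + c + (4 * a * x + b) * t + a * t ^+ 2)).
  rewrite gq_taylor Em.
  have -> : gd a b c d x * t = - (m * p%:Z ^+ N.+1) * (u * gd a b c d x) by rewrite /t; ring.
  rewrite (_ : u * gd a b c d x = 1 - v * p%:Z); last by rewrite -Bez; ring.
  rewrite /t !exprS; ring.
apply: contra Hdx => H.
have -> : gd a b c d x = gd a b c d (x + t) - t * (12 * a * x ^+ 2 + 6 * b * x + 2 * c
   + (12 * a * x + 3 * b) * t + 4 * a * t ^+ 2) by rewrite gd_taylor; ring.
apply: rpredB => //; apply: dvdz_mulr; rewrite /t exprS mulrA.
by apply: dvdz_mulr; apply: dvdz_mull; apply: dvdzz.
Qed.

Lemma gq_shift a b c d e T x : gq a b c d (e - T) x = gq a b c d e x - T.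
Proof. rewrite /gq; ring. Qed.

Lemma quartic_gq a b c d e x : quartic a b c d e x 1 = gq a b c d e x.
Proof. rewrite /quartic /gq; ring. Qed.

Lemma nu_frac (p : nat) (A B : int) : A != 0 -> B != 0 ->
  nu_p p (A%:~R / B%:~R) = (logn p `|A|)%:Z - (logn p `|B|)%:Z.
Proof.
move=> A0 B0; set x : rat := A%:~R / B%:~R.
have xn0 : x != 0 by rewrite mulf_neq0 ?invr_eq0 ?intr_eq0.
have E : numq x * B = A * denq x.
  apply: (@intr_inj rat); rewrite !intrM numqE /x.
  by rewrite mulrAC divfK // intr_eq0.
have := congr1 (fun z => logn p `|z|) E; rewrite /= !abszM.
rewrite !lognM ?absz_gt0 ?numq_eq0 ?denq_neq0 // => H.
rewrite /nu_p; lia.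
Qed.

Lemma val_bound (p : nat) (M Nt : nat) (g w : int) : prime p -> (M < Nt)%N ->
  g = p%:Z ^+ M + w * p%:Z ^+ Nt -> g != 0 /\ (logn p `|g| <= M)%N.
Proof.
move=> pr MN Eg.
have p1 : (1 < `|p%:Z|)%N by rewrite /= prime_gt1.
have g0 : g != 0.
  apply/eqP => g0; move: Eg; rewrite g0 => /eqP; rewrite eq_sym addr_eq0 => /eqP E.
  have : (p%:Z ^+ Nt %| p%:Z ^+ M)%Z by rewrite E rpredN dvdz_mull.
  by rewrite dvdz_Pexp2l // leqNgt MN.
split => //; rewrite leqNgt; apply/negP => H.
have : (p ^ M.+1 %| `|g|)%N by rewrite pfactor_dvdn // absz_gt0.
rewrite -(abszX M.+1 p%:Z) -dvdzE => Hd.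
have : (p%:Z ^+ M.+1 %| p%:Z ^+ M)%Z.
  have -> : p%:Z ^+ M = g - w * p%:Z ^+ Nt by rewrite Eg; ring.
  apply: rpredB => //; apply: dvdz_mull; exact: dvdz_exp2l.
by rewrite dvdz_Pexp2l // ltnn.
Qed.

Lemma density (a b c d e : int) (p : nat) (r : int) : prime p -> a != 0 ->
  (p%:Z %| gq a b c d e r)%Z -> ~~ (p%:Z %| gd a b c d r)%Z ->
  dense_in_Qp p (RF a b c d e).
Proof.
move=> pr a0 Hr Hd q k.
case: (eqVneq q 0) => [->|q0].
  exists 0; split; last by left.
  exists 0, 0, 1, 0.
  have -> : quartic a b c d e 1 0 = a by rewrite /quartic; ring.
  have -> : quartic a b c d e 0 0 = 0 by rewrite /quartic; ring.
  by rewrite a0 mul0r.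
set n := numq q; set D := denq q.
have Dpos : (0 < `|D|)%N by rewrite absz_gt0 denq_neq0.
have [m cop Em] := pfactor_coprime pr Dpos.
set be := logn p `|D| in Em.
have Dz : D = m%:Z * p%:Z ^+ be.
  by rewrite -[D]absz_denq -/D Em PoszM -!natz natrX.
set M := be.+1.
set Nt := (M + be + `|k|).+1.
have MN : (M < Nt)%N by rewrite /Nt; lia.
have pdvdp j : (0 < j)%N -> (p%:Z %| p%:Z ^+ j)%Z by move=> j0; apply: dvdz_exp.
have h2 : (p%:Z %| gq a b c d (e - p%:Z ^+ M) r)%Z.
  rewrite gq_shift; apply: rpredB => //; change (p%:Z %| p%:Z ^+ M)%Z; exact: pdvdp.
have [X2 [H2 _]] := hensel pr h2 Hd (M + be + `|k|).
have [w2 E2] := dvdzP H2; rewrite gq_shift in E2.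
have copz : coprimez m%:Z (p%:Z ^+ Nt).
  by apply: coprimezXr; rewrite coprimezE /= coprime_sym.
have [[u v] /= Bez] := coprimezP _ _ copz.
set T1 := n * p%:Z * u.
have h1 : (p%:Z %| gq a b c d (e - T1) r)%Z.
  rewrite gq_shift; apply: rpredB => //; change (p%:Z %| n * p%:Z * u)%Z.
  by apply: dvdz_mulr; apply: dvdz_mull; exact: dvdzz.
have [X1 [H1 _]] := hensel pr h1 Hd (M + be + `|k|).
have [w1 E1] := dvdzP H1; rewrite gq_shift in E1.
have E2' : gq a b c d e X2 = p%:Z ^+ M + w2 * p%:Z ^+ Nt by rewrite -E2; ring.
have E1' : gq a b c d e X1 = T1 + w1 * p%:Z ^+ Nt by rewrite -E1; ring.
have [g20 lg2] := val_bound pr MN E2'.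
have D0 : D != 0 by rewrite denq_neq0.
set A := gq a b c d e X1 * D - n * gq a b c d e X2.
set B := gq a b c d e X2 * D.
have B0 : B != 0 by rewrite mulf_neq0.
exists ((gq a b c d e X1)%:~R / (gq a b c d e X2)%:~R); split.
  by exists X1, 1, X2, 1; rewrite !quartic_gq.
have Erq : (gq a b c d e X1)%:~R / (gq a b c d e X2)%:~R - q = A%:~R / B%:~R :> rat.
  rewrite -{1}(divq_num_den q) -/n -/D /A /B !intrM intrB !intrM.
  field; rewrite ?intr_eq0 //; apply/andP; split; [exact: denq_neq0 | exact: g20].
case: (eqVneq A 0) => [A0|A0].
  by left; apply/eqP; rewrite -subr_eq0 Erq A0 mul0r.
right; rewrite Erq nu_frac //.
have HA : (p%:Z ^+ Nt %| A)%Z.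
  apply/dvdzP; exists (w1 * m%:Z * p%:Z ^+ be - n * w2 - n * p%:Z * p%:Z ^+ be * v).
  rewrite /A E1' E2' Dz /T1 /M exprS.
  move: (p%:Z ^+ be) (p%:Z ^+ Nt) Bez => P1 PN Bez.
  have -> : (n * p%:Z * u + w1 * PN) * (m%:Z * P1) - n * (p%:Z * P1 + w2 * PN) =
    (w1 * m%:Z * P1 - n * w2 - n * p%:Z * P1 * v) * PN + n * p%:Z * P1 * (u * m%:Z + v * PN - 1)
    by ring.
  by rewrite Bez subrr mulr0 addr0.
have lA : (Nt <= logn p `|A|)%N.
  rewrite -pfactor_dvdn ?absz_gt0 // -(abszX Nt p%:Z) -dvdzE; exact: HA.
have lB : (logn p `|B| <= M + be)%N.
  rewrite /B abszM lognM ?absz_gt0 // -/be.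
  by rewrite leq_add2r.
rewrite /Nt in lA; move: (logn p `|A|) (logn p `|B|) lA lB => x y lA lB.
clear -lA lB; lia.
Qed.


Lemma Fp_val (p : nat) (pr : prime p) (x : 'F_p) : ((val x)%:Z)%:~R = x.
Proof.
apply: val_inj; rewrite /= val_Fp_nat // modn_small //.
by case: x => /= x; rewrite Fp_cast.
Qed.

Lemma st_S (a c d e : int) n : s_triple a c d e n.+1 =
  ((s_triple a c d e n).1.2, (s_triple a c d e n).2,
   - (2 * a * c) * (s_triple a c d e n).2
   + (4 * a ^+ 3 * e - a ^+ 2 * c ^+ 2) * (s_triple a c d e n).1.2
   + a ^+ 4 * d ^+ 2 * (s_triple a c d e n).1.1).
Proof. by rewrite /=; case: (s_triple a c d e n) => [[x y] z]. Qed.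

Lemma s_rec (a c d e : int) n : s_seq a c d e n.+3 =
  - (2 * a * c) * s_seq a c d e n.+2
  + (4 * a ^+ 3 * e - a ^+ 2 * c ^+ 2) * s_seq a c d e n.+1
  + a ^+ 4 * d ^+ 2 * s_seq a c d e n.
Proof.
have h1 m : s_seq a c d e m.+1 = (s_triple a c d e m).1.2 by rewrite /s_seq st_S.
have h2 m : s_seq a c d e m.+2 = (s_triple a c d e m).2 by rewrite h1 st_S.
by rewrite h2 st_S /= -h1 -h2.
Qed.

Theorem theorem5p6 (a b c d e : int) (p : nat) :
  a != 0 -> b != 0 -> prime p -> (3 < p)%N -> (p%:Z %| b)%Z ->
  ( ((p %% 3)%N = 1%N
       /\ (p%:Z %| a ^+ 2 * c ^+ 2 + 12 * a ^+ 3 * e)%Z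
       /\ ~ cubic_residue p (8 * a ^+ 3 * c ^+ 3 + 27 * a ^+ 4 * d ^+ 2))
    \/
    (~~ (p%:Z %| a ^+ 2 * c ^+ 2 + 12 * a ^+ 3 * e)%Z
       /\ (p%:Z %| s_seq a c d e p.+1 - (a ^+ 2 * c ^+ 2 - 4 * a ^+ 3 * e))%Z) ) ->
  dense_in_Qp p (RF a b c d e).
Proof.
move=> a0 b0 pr p3 pb H.
have dF (z : int) : (p%:Z %| z)%Z = ((z%:~R : 'F_p) == 0) := dvdz_pcharf (pchar_Fp pr) z.
pose A : 'F_p := a%:~R.
pose P : 'F_p := (a * c)%:~R.
pose Q : 'F_p := (a ^+ 2 * d)%:~R.
pose R : 'F_p := (a ^+ 3 * e)%:~R.
pose S n : 'F_p := (s_seq a c d e n)%:~R.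
have EK : ((a ^+ 2 * c ^+ 2 + 12 * a ^+ 3 * e)%:~R : 'F_p) = P ^+ 2 + 12 * R.
  by rewrite /P /R !(rmorphD, rmorphB, rmorphN, rmorphM, rmorphXn, rmorph_nat); ring.
have EC : ((8 * a ^+ 3 * c ^+ 3 + 27 * a ^+ 4 * d ^+ 2)%:~R : 'F_p) = 8 * P ^+ 3 + 27 * Q ^+ 2.
  by rewrite /P /Q !(rmorphD, rmorphB, rmorphN, rmorphM, rmorphXn, rmorph_nat); ring.
have A0 : A != 0.
  apply/eqP => A0.
  have P0 : P = 0 by rewrite /P rmorphM /= -/A A0 mul0r.
  have R0 : R = 0 by rewrite /R rmorphM rmorphXn /= -/A A0 expr0n mul0r.
  case: H => [[_ [_ Hc]]|[HK _]].
    apply: Hc; exists 0; rewrite dF.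
    have Q0 : Q = 0 by rewrite /Q rmorphM rmorphXn /= -/A A0 expr0n mul0r.
    rewrite intrB EC P0 Q0 (_ : (0 : int) ^+ 3 = 0) // rmorph0.
    by apply/eqP; ring.
  by move: HK; rewrite dF EK P0 R0 expr0n mulr0 addr0 eqxx.
have Hcond : ((P ^+ 2 + 12 * R = 0 /\ forall u : 'F_p, u ^+ 3 != 8 * P ^+ 3 + 27 * Q ^+ 2) \/
   (P ^+ 2 + 12 * R != 0 /\ S p.+1 = P ^+ 2 - 4 * R)).
  case: H => [[_ [HK Hc]]|[HK Hs]].
    left; split; first by apply/eqP; rewrite -EK -dF.
    move=> u; apply/negP => /eqP Eu; apply: Hc; exists (val u)%:Z.
    by rewrite dF intrB rmorphXn /= Fp_val // EC Eu subrr.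
  right; split; first by rewrite -EK -dF.
  have E4 : P ^+ 2 - 4 * R = ((a ^+ 2 * c ^+ 2 - 4 * a ^+ 3 * e)%:~R : 'F_p).
    by rewrite /P /R !(rmorphD, rmorphB, rmorphN, rmorphM, rmorphXn, rmorph_nat); ring.
  by rewrite E4 /S; apply/eqP; rewrite -subr_eq0 -intrB -dF.
have S0 : S 0%N = 3 by rewrite /S /s_seq /= rmorph_nat.
have S1 : S 1%N = - (2 * P).
  by rewrite /S /s_seq /P /= !(rmorphN, rmorphM, rmorph_nat); ring.
have S2 : S 2%N = 2 * P ^+ 2 + 8 * R.
  by rewrite /S /s_seq /P /R /= !(rmorphD, rmorphN, rmorphM, rmorphXn, rmorph_nat); ring.
have Srec n : S n.+3 = - (2 * P) * S n.+2 + (4 * R - P ^+ 2) * S n.+1 + Q ^+ 2 * S n.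
  rewrite /S s_rec /P /Q /R.
  by rewrite !(rmorphD, rmorphB, rmorphN, rmorphM, rmorphXn, rmorph_nat); ring.
have [y [hy hdy]] := field_root pr p3 S0 S1 S2 Srec Hcond.
pose x : 'F_p := y / A.
have xA : x * A = y by rewrite /x divfK.
set X : int := (val x)%:Z.
have XF : (X%:~R : 'F_p) = x by rewrite Fp_val.
have bF : (b%:~R : 'F_p) = 0 by apply/eqP; rewrite -dF.
apply: (@density a b c d e p X pr a0).
  rewrite dF; apply/eqP.
  have : A ^+ 3 * (gq a b c d e X)%:~R = y ^+ 4 + P * y ^+ 2 + Q * y + R.
    rewrite /gq !(rmorphD, rmorphM, rmorphXn) /= XF bF -/A -xA /P /Q /R.
    rewrite !(rmorphM, rmorphXn) /= -/A; ring.
  by rewrite hy; move/eqP; rewrite mulf_eq0 expf_eq0 (negbTE A0) andbF /= => /eqP.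
rewrite dF; apply: contra hdy => /eqP Hg.
have : A ^+ 2 * (gd a b c d X)%:~R = 4 * y ^+ 3 + 2 * P * y + Q.
  rewrite /gd !(rmorphD, rmorphM, rmorphXn, rmorph_nat) /= XF bF -/A -xA /P /Q.
  rewrite !(rmorphM, rmorphXn) /= -/A; ring.
by rewrite Hg mulr0 => <-.
Qed.
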